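(* Let $p\in(0,1/2)$ and $\beta<0$. Then there exists $r_0=r_0(p,\beta)>0$ and a convex function $u$ with the following properties: - $u\in C^\infty(\Sigma_{\beta,r_0})$, $u$ is continuous up to $\varsigma_{\beta,r_0}$, and $u>0$ in $\Sigma_{\beta,r_0}$; - $u$ solves $\det D^2u=u^p$ in $\Sigma_{\beta,r_0}$; - $u=0$ on $\varsigma_{\beta,r_0}$.
   Context: For $\beta<0$ and $r_0>0$, define the ''wiping domain'' and its boundary curve by $$\Sigma_{\beta,r_0}=\{(x,y)\in\mathbb{R}^2:\ y>0,\ e^xy^\beta>r_0\},\qquad \varsigma_{\beta,r_0}=\{(x,y)\in\mathbb{R}^2:\ y>0,\ e^xy^\beta=r_0\}.$$ *)

(* Defs.v *)
From Stdlib Require Import Reals Lra.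
From Coquelicot Require Import Coquelicot.
Open Scope R_scope.

Definition Sigma (beta r0 : R) (z : R * R) : Prop :=
  0 < snd z /\ exp (fst z) * Rpower (snd z) beta > r0.

Definition varsigma (beta r0 : R) (z : R * R) : Prop :=
  0 < snd z /\ exp (fst z) * Rpower (snd z) beta = r0.

Definition continuous_on2 (D : R * R -> Prop) (f : R * R -> R) : Prop :=
  forall z, D z -> continuous f z.

Fixpoint Ck2 (k : nat) (D : R * R -> Prop) (f : R * R -> R) : Prop :=
  match k with
  | O => continuous_on2 D f
  | S k' =>
      continuous_on2 D f /\
      exists fx fy : R * R -> R,
        (forall z, D z ->
           is_derive (fun s => f (s, snd z)) (fst z) (fx z) /\
           is_derive (fun t => f (fst z, t)) (snd z) (fy z)) /\
        Ck2 k' D fx /\ Ck2 k' D fy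
  end.

Definition smooth_on2 (D : R * R -> Prop) (f : R * R -> R) : Prop :=
  forall k, Ck2 k D f.

Definition d_xx (f : R * R -> R) (z : R * R) : R :=
  Derive_n (fun s => f (s, snd z)) 2 (fst z).
Definition d_yy (f : R * R -> R) (z : R * R) : R :=
  Derive_n (fun t => f (fst z, t)) 2 (snd z).
Definition d_xy (f : R * R -> R) (z : R * R) : R :=
  Derive (fun t => Derive (fun s => f (s, t)) (fst z)) (snd z).

Definition hess_det (f : R * R -> R) (z : R * R) : R :=
  d_xx f z * d_yy f z - d_xy f z * d_xy f z.

(* Convexity of f on the (not necessarily convex) set D: f is convex along
   every line segment contained in D. *)
Definition convex_on2 (D : R * R -> Prop) (f : R * R -> R) : Prop :=
  forall a b : R * R,
    (forall t, 0 <= t <= 1 ->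
       D (t * fst a + (1 - t) * fst b, t * snd a + (1 - t) * snd b)) ->
    forall t, 0 <= t <= 1 ->
      f (t * fst a + (1 - t) * fst b, t * snd a + (1 - t) * snd b)
        <= t * f a + (1 - t) * f b.

(* Main.v *)
Require Import Defs.
From Stdlib Require Import Reals Lra Lia ClassicalEpsilon.
From Coquelicot Require Import Coquelicot.
Open Scope R_scope.


Lemma isd_plus f g x df dg : is_derive f x df -> is_derive g x dg ->
  is_derive (fun y => f y + g y) x (df + dg).
Proof. intros H1 H2. exact (is_derive_plus f g x df dg H1 H2). Qed.
Lemma isd_mult f g x df dg : is_derive f x df -> is_derive g x dg ->
  is_derive (fun y => f y * g y) x (df * g x + f x * dg).
Proof. intros H1 H2. exact (is_derive_mult f g x df dg H1 H2 Rmult_comm). Qed.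
Lemma isd_comp f g x df dg : is_derive f (g x) df -> is_derive g x dg ->
  is_derive (fun y => f (g y)) x (dg * df).
Proof. intros H1 H2. exact (is_derive_comp f g x df dg H1 H2). Qed.
Lemma isd_const (c x : R) : is_derive (fun _ => c) x 0.
Proof. exact (is_derive_const c x). Qed.
Lemma isd_id (x : R) : is_derive (fun y => y) x 1.
Proof. exact (is_derive_id x). Qed.
Lemma isd_ext (f g : R -> R) (x l l' : R) : (forall y, f y = g y) -> l = l' -> is_derive f x l -> is_derive g x l'.
Proof. intros H e D; subst; apply (is_derive_ext f g); auto. Qed.
Lemma isd_eq (f : R -> R) (x l l' : R) : l = l' -> is_derive f x l -> is_derive f x l'.
Proof. intros ->; auto. Qed.
Lemma cont_plus (f g : R -> R) x : continuous f x -> continuous g x -> continuous (fun y => f y + g y) x.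
Proof. intros; exact (continuous_plus f g x H H0). Qed.
Lemma cont_mult (f g : R -> R) x : continuous f x -> continuous g x -> continuous (fun y => f y * g y) x.
Proof. intros; exact (continuous_mult f g x H H0). Qed.

Lemma pos_locally x : 0 < x -> locally x (fun t => 0 < t).
Proof. intros hx. apply (locally_interval _ x 0 p_infty); simpl; auto. Qed.

Fixpoint Cn (n : nat) (f : R -> R) : Prop :=
  match n with
  | O => forall x, 0 < x -> continuous f x
  | S m => exists f', (forall x, 0 < x -> is_derive f x (f' x)) /\ Cn m f'
  end.

Lemma Cn_cont n f : Cn n f -> forall x, 0 < x -> continuous f x.
Proof.
  destruct n; simpl; auto. intros [f' [H _]] x hx.
  apply (ex_derive_continuous (V:=R_NormedModule) f x). exists (f' x); auto.
Qed.

Lemma Cn_ext n : forall f h, (forall x, 0 < x -> f x = h x) -> Cn n f -> Cn n h.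
Proof.
  induction n; simpl; intros f h E C.
  - intros x hx. apply (continuous_ext_loc h f x).
    + generalize (pos_locally x hx). apply filter_imp. intros; auto.
    + auto.
  - destruct C as [f' [D C]]. exists f'; split; auto.
    intros x hx. apply (is_derive_ext_loc f h x). 2: auto.
    generalize (pos_locally x hx). apply filter_imp. intros; auto.
Qed.

Lemma Cn_S n : forall f, Cn (S n) f -> Cn n f.
Proof.
  induction n; intros f C.
  - simpl; intros x hx; exact (Cn_cont 1 f C x hx).
  - destruct C as [f' [D C]]. exists f'; split; auto.
Qed.

Lemma Cn_plus n : forall f h, Cn n f -> Cn n h -> Cn n (fun x => f x + h x).
Proof.
  induction n; simpl; intros f h C1 C2.
  - intros x hx. apply cont_plus; auto.
  - destruct C1 as [f' [D1 C1]], C2 as [h' [D2 C2]].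
    exists (fun x => f' x + h' x); split; auto.
    intros x hx; apply isd_plus; auto.
Qed.

Lemma Cn_mult n : forall f h, Cn n f -> Cn n h -> Cn n (fun x => f x * h x).
Proof.
  induction n; intros f h C1 C2.
  - intros x hx. apply cont_mult; apply (Cn_cont 0); auto.
  - pose proof (Cn_S _ _ C1) as C1'. pose proof (Cn_S _ _ C2) as C2'.
    destruct C1 as [f' [D1 C1]], C2 as [h' [D2 C2]].
    exists (fun x => f' x * h x + f x * h' x); split.
    + intros x hx; apply isd_mult; auto.
    + apply Cn_plus; apply IHn; auto.
Qed.

Lemma Cn_const n : forall c, Cn n (fun _ => c).
Proof.
  induction n; simpl; intros c.
  - intros; apply continuous_const.
  - exists (fun _ => 0); split; auto. intros; apply isd_const.
Qed.

Lemma Cn_id n : Cn n (fun x => x).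
Proof.
  destruct n; simpl.
  - intros; apply continuous_id.
  - exists (fun _ => 1); split. intros; apply isd_id. apply Cn_const.
Qed.

Lemma Cn_inv n : forall f, (forall x, 0 < x -> f x <> 0) -> Cn n f -> Cn n (fun x => / f x).
Proof.
  induction n; intros f Hf C.
  - intros x hx. apply continuous_comp. apply (Cn_cont 0); auto.
    apply continuity_pt_filterlim. apply continuity_pt_inv. apply continuity_pt_id. auto.
  - pose proof (Cn_S _ _ C) as C'. destruct C as [f' [D C]].
    exists (fun x => - f' x * (/ f x * / f x)); split.
    + intros x hx. eapply isd_eq. 2: apply is_derive_inv; auto.
      field. auto.
    + apply Cn_mult. apply (Cn_mult n (fun _ => -1) f') in C. 2: apply Cn_const.
      eapply Cn_ext. 2: exact C. intros; simpl; ring.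
      apply Cn_mult; apply IHn; auto.
Qed.

Lemma Cn_rpow n : forall q, Cn n (fun x => Rpower x q).
Proof.
  induction n; intros q.
  - intros x hx. apply continuity_pt_filterlim.
    apply derivable_continuous_pt. exists (q * Rpower x (q-1)).
    apply derivable_pt_lim_power; auto.
  - exists (fun x => q * Rpower x (q - 1)); split.
    + intros x hx. apply is_derive_Reals. apply derivable_pt_lim_power; auto.
    + apply Cn_mult. apply Cn_const. apply IHn.
Qed.

Lemma Cn_comp n : forall Q h, (forall x, 0 < x -> 0 < h x) -> Cn n Q -> Cn n h ->
  Cn n (fun x => Q (h x)).
Proof.
  induction n; intros Q h Hh C1 C2.
  - intros x hx. apply continuous_comp. apply (Cn_cont 0); auto.
    apply (Cn_cont 0); auto.
  - pose proof (Cn_S _ _ C2) as C2'.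
    destruct C1 as [Q' [D1 C1]], C2 as [h' [D2 C2]].
    exists (fun x => h' x * Q' (h x)); split.
    + intros x hx. apply isd_comp; auto.
    + apply Cn_mult; auto.
Qed.

Definition Cinf f := forall n, Cn n f.

Lemma Cinf_der f : Cinf f -> (forall x, 0 < x -> is_derive f x (Derive f x)) /\ Cinf (Derive f).
Proof.
  intros C. split.
  - intros x hx. destruct (C 1%nat) as [f' [D _]].
    rewrite (is_derive_unique f x (f' x)); auto.
  - intros n. destruct (C (S n)) as [f' [D Cf]].
    apply (Cn_ext n f'); auto. intros x hx. symmetry; apply is_derive_unique; auto.
Qed.


Lemma cont_eps (f : R -> R) x : continuous f x <->
  (forall eps, 0 < eps -> exists d, 0 < d /\ forall y, Rabs (y - x) < d -> Rabs (f y - f x) < eps).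
Proof.
  split.
  - intros H eps he. apply filterlim_locally with (eps := mkposreal eps he) in H.
    destruct H as [d Hd]. exists d; split. apply cond_pos.
    intros y hy. apply (Hd y). exact hy.
  - intros H. apply filterlim_locally. intros eps.
    destruct (H eps (cond_pos eps)) as [d [hd Hd]].
    exists (mkposreal d hd). intros y hy. apply Hd. exact hy.
Qed.

Fixpoint Pn (F : R -> R -> R) (n : nat) (s : R) : R :=
  match n with
  | O => 1
  | S m => 1 + RInt (fun r => F r (Pn F m r)) 0 s
  end.

Lemma RInt_cont_derive (G : R -> R) (x : R) : (forall y, continuous G y) ->
  is_derive (fun s => RInt G 0 s) x (G x).
Proof.
  intros HG. apply (is_derive_RInt G (fun s => RInt G 0 s) 0 x).
  - apply filter_forall. intros b. apply (@RInt_correct R_CompleteNormedModule).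
    apply (@ex_RInt_continuous R_CompleteNormedModule). intros; auto.
  - auto.
Qed.

Lemma exRI (G : R -> R) a b : (forall y, continuous G y) -> ex_RInt G a b.
Proof. intros; apply (@ex_RInt_continuous R_CompleteNormedModule); auto. Qed.


Lemma Pn_cont F : (forall f x, continuous f x -> continuous (fun r => F r (f r)) x) ->
  forall n x, continuous (Pn F n) x.
Proof.
  intros HF n. induction n; intros x; simpl.
  - apply continuous_const.
  - apply (ex_derive_continuous (V:=R_NormedModule)).
    apply (ex_derive_plus (fun _ => 1) (fun s => RInt (fun r => F r (Pn F n r)) 0 s)).
    apply ex_derive_const. eexists. apply RInt_cont_derive. intros; auto.
Qed.

Lemma fact_S_R n : INR (Factorial.fact (S n)) = INR (S n) * INR (Factorial.fact n).
Proof. change (Factorial.fact (S n)) with (S n * Factorial.fact n)%nat. apply mult_INR. Qed.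

Lemma poly_RInt (C : R) n s :
  RInt (fun r => C * r ^ n / INR (Factorial.fact n)) 0 s = C * s ^ (S n) / INR (Factorial.fact (S n)).
Proof.
  apply is_RInt_unique.
  assert (Hf : INR (Factorial.fact n) <> 0) by (apply INR_fact_neq_0).
  assert (Hf' : INR (Factorial.fact (S n)) <> 0) by (apply INR_fact_neq_0).
  assert (H := is_RInt_derive (fun r => C * r ^ (S n) / INR (Factorial.fact (S n)))
     (fun r => C * r ^ n / INR (Factorial.fact n)) 0 s).
  replace (C * s ^ S n / INR (Factorial.fact (S n))) with
     (minus (C * s ^ S n / INR (Factorial.fact (S n))) (C * 0 ^ S n / INR (Factorial.fact (S n)))).
  apply H.
  - intros x _.
    assert (D: is_derive (fun r => r ^ S n) x (INR (S n) * x ^ pred (S n))).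
    { apply is_derive_Reals; apply derivable_pt_lim_pow. }
    apply (is_derive_scal _ _ (C / INR (Factorial.fact (S n)))) in D.
    apply (is_derive_ext (fun r => C / INR (Factorial.fact (S n)) * r ^ S n)).
    { intros; simpl; field; auto. }
    replace (C * x ^ n / INR (Factorial.fact n)) with
      (C / INR (Factorial.fact (S n)) * (INR (S n) * x ^ pred (S n))). exact D.
    rewrite fact_S_R. simpl pred. field. split; auto. apply not_0_INR. lia.
  - intros x _. apply continuity_pt_filterlim. apply derivable_continuous_pt.
    apply derivable_pt_div. apply derivable_pt_mult. apply derivable_pt_const.
    apply derivable_pt_pow. apply derivable_pt_const. auto.
  - change (minus ?a ?b) with (a - b). simpl. field. auto.
Qed.

Lemma cont_abs (f : R -> R) x : continuous f x -> continuous (fun y => Rabs (f y)) x.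
Proof.
  intros H. apply continuous_comp; auto. apply continuity_pt_filterlim. apply Rcontinuity_abs.
Qed.
Lemma cont_minus (f g : R -> R) x : continuous f x -> continuous g x -> continuous (fun y => f y - g y) x.
Proof. intros H1 H2. apply (continuous_minus f g x H1 H2). Qed.

Lemma RInt_minus' (f g : R -> R) a b : ex_RInt f a b -> ex_RInt g a b ->
  RInt (fun x => f x - g x) a b = RInt f a b - RInt g a b.
Proof. intros H1 H2. exact (RInt_minus f g a b H1 H2). Qed.

Lemma aux_1pm (X : R) : 1 + X - 1 = X.
Proof. ring. Qed.
Lemma Rplus_minus_eq_aux (X Y : R) : 1 + X - (1 + Y) = X - Y.
Proof. ring. Qed.

Lemma Pn_est F K L :
  (forall s y, 0 <= F s y <= K) ->
  (forall s y z, Rabs (F s y - F s z) <= L * Rabs (y - z)) ->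
  (forall f x, continuous f x -> continuous (fun r => F r (f r)) x) -> 0 <= L ->
  forall n s, 0 <= s -> Rabs (Pn F (S n) s - Pn F n s) <= K * L ^ n * s ^ (S n) / INR (Factorial.fact (S n)).
Proof.
  intros HK HL HC L0 n. induction n; intros s hs.
  - simpl Pn. rewrite aux_1pm.
    eapply Rle_trans. apply abs_RInt_le_const with (M := K); auto.
    apply exRI. intros; apply HC; apply continuous_const.
    intros t _. rewrite Rabs_right. apply HK. apply Rle_ge, HK.
    simpl. lra.
  - assert (C1 : forall y, continuous (fun r => F r (Pn F (S n) r)) y) by (intros; apply HC; apply Pn_cont; auto).
    assert (C0 : forall y, continuous (fun r => F r (Pn F n r)) y) by (intros; apply HC; apply Pn_cont; auto).
    change (Pn F (S (S n)) s) with (1 + RInt (fun r => F r (Pn F (S n) r)) 0 s).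
    change (Pn F (S n) s) with (1 + RInt (fun r => F r (Pn F n r)) 0 s).
    replace (1 + RInt (fun r => F r (Pn F (S n) r)) 0 s - (1 + RInt (fun r => F r (Pn F n r)) 0 s))
      with (RInt (fun r => F r (Pn F (S n) r) - F r (Pn F n r)) 0 s).
    2: { rewrite RInt_minus'; try apply exRI; auto. apply (fun X Y : R => eq_sym (Rplus_minus_eq_aux X Y)). }
    eapply Rle_trans. apply abs_RInt_le; auto. apply exRI. intros; apply cont_minus; auto.
    rewrite <- poly_RInt. apply RInt_le; auto.
    + apply exRI. intros; apply cont_abs, cont_minus; auto.
    + apply exRI. intros. apply continuity_pt_filterlim. apply derivable_continuous_pt.
      apply derivable_pt_div. apply derivable_pt_mult. apply derivable_pt_const.
      apply derivable_pt_pow. apply derivable_pt_const. apply INR_fact_neq_0.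
    + intros r hr. eapply Rle_trans. apply HL.
      replace (K * L ^ S n * r ^ S n / INR (Factorial.fact (S n))) with
        (L * (K * L ^ n * r ^ S n / INR (Factorial.fact (S n)))) by (change (L ^ S n) with (L * L ^ n); field; apply INR_fact_neq_0).
      apply Rmult_le_compat_l; auto. apply IHn. lra.
Qed.

Definition cc (x : R) (j : nat) : R := / INR (Factorial.fact j) * x ^ j.
Definition SC (x : R) (N : nat) : R := sum_f_R0 (cc x) N.

Lemma SC_cv x : Un_cv (SC x) (exp x).
Proof. unfold exp. destruct (exist_exp x) as [l H]. simpl. exact H. Qed.

Lemma cc_pos x j : 0 <= x -> 0 <= cc x j.
Proof. intros; unfold cc. apply Rmult_le_pos. left; apply Rinv_0_lt_compat, INR_fact_lt_0. apply pow_le; auto. Qed.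

Lemma SC_mono x n d : 0 <= x -> SC x n <= SC x (n + d).
Proof.
  intros hx. induction d. rewrite Nat.add_0_r; lra.
  rewrite Nat.add_succ_r. unfold SC in *. rewrite tech5. generalize (cc_pos x (S (n + d)) hx). lra.
Qed.

Lemma SC_le_exp x n : 0 <= x -> SC x n <= exp x.
Proof.
  intros hx. apply growing_ineq. intros m. unfold SC. rewrite tech5. generalize (cc_pos x (S m) hx); lra.
  apply SC_cv.
Qed.

Lemma SC_tail x eps : 0 < eps -> exists N, forall n, (N <= n)%nat -> exp x - SC x n < eps.
Proof.
  intros he. destruct (SC_cv x eps he) as [N HN]. exists N. intros n hn.
  specialize (HN n hn). unfold Rdist in HN. apply Rabs_def2 in HN. lra.
Qed.

Definition tau (K L Sb : R) (n : nat) : R := K / L * (exp (L * Sb) - SC (L * Sb) n).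


Lemma Pn_est2 F K L Sb :
  (forall s y, 0 <= F s y <= K) ->
  (forall s y z, Rabs (F s y - F s z) <= L * Rabs (y - z)) ->
  (forall f x, continuous f x -> continuous (fun r => F r (f r)) x) -> 0 < L ->
  forall s n d, 0 <= s <= Sb -> Rabs (Pn F (n + d) s - Pn F n s) <= K / L * (SC (L * Sb) (n + d) - SC (L * Sb) n).
Proof.
  intros HK HL HC L0 s n d hs. assert (K0 : 0 <= K) by (destruct (HK 0 0); lra).
  induction d.
  - rewrite Nat.add_0_r. unfold Rminus. rewrite !Rplus_opp_r, Rabs_R0. lra.
  - rewrite Nat.add_succ_r. unfold SC. rewrite tech5. fold (SC (L * Sb) (n + d)). fold (SC (L * Sb) n).
    replace (Pn F (S (n + d)) s - Pn F n s) with ((Pn F (S (n + d)) s - Pn F (n + d) s) + (Pn F (n + d) s - Pn F n s)) by ring.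
    eapply Rle_trans. apply Rabs_triang.
    assert (Hb : Rabs (Pn F (S (n + d)) s - Pn F (n + d) s) <= K / L * cc (L * Sb) (S (n + d))).
    { eapply Rle_trans. apply (Pn_est F K L) ; auto; try lra.
      unfold cc. rewrite Rpow_mult_distr.
      replace (K / L * (/ INR (Factorial.fact (S (n + d))) * (L ^ S (n + d) * Sb ^ S (n + d))))
        with (K * L ^ (n + d) * Sb ^ S (n + d) / INR (Factorial.fact (S (n + d)))).
      2: { change (L ^ S (n + d)) with (L * L ^ (n + d)). field. split. apply INR_fact_neq_0. lra. }
      unfold Rdiv. apply Rmult_le_compat_r. left; apply Rinv_0_lt_compat, INR_fact_lt_0.
      apply Rmult_le_compat_l. apply Rmult_le_pos; auto. apply pow_le; lra.
      apply pow_incr; lra. }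
    lra.
Qed.

Lemma tau_pos K L Sb n : 0 <= K -> 0 < L -> 0 <= Sb -> 0 <= tau K L Sb n.
Proof.
  intros. unfold tau. apply Rmult_le_pos. unfold Rdiv; apply Rmult_le_pos; auto. left; apply Rinv_0_lt_compat; auto.
  generalize (SC_le_exp (L * Sb) n). intros H'. assert (0 <= L * Sb) by (apply Rmult_le_pos; lra). specialize (H' H2). lra.
Qed.

Lemma tau_small K L Sb eps : 0 <= K -> 0 < L -> 0 <= Sb -> 0 < eps -> exists N, forall n, (N <= n)%nat -> tau K L Sb n < eps.
Proof.
  intros K0 L0 S0 he.
  assert (KL : 0 <= K / L) by (unfold Rdiv; apply Rmult_le_pos; auto; left; apply Rinv_0_lt_compat; auto).
  destruct (SC_tail (L * Sb) (eps / (K / L + 1))) as [N HN].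
  apply Rdiv_lt_0_compat; auto. lra.
  exists N. intros n hn. specialize (HN n hn). unfold tau.
  assert (0 <= L * Sb) by (apply Rmult_le_pos; lra).
  generalize (SC_le_exp (L * Sb) n H); intros.
  apply Rle_lt_trans with ((K / L + 1) * (exp (L * Sb) - SC (L * Sb) n)).
  apply Rmult_le_compat_r; lra.
  apply Rmult_lt_compat_l with (r := K / L + 1) in HN. 2: lra.
  replace ((K / L + 1) * (eps / (K / L + 1))) with eps in HN by (field; lra). lra.
Qed.

Definition Plim F (s : R) : R := real (Lim_seq (fun n => Pn F n s)).

Lemma Plim_spec F K L :
  (forall s y, 0 <= F s y <= K) ->
  (forall s y z, Rabs (F s y - F s z) <= L * Rabs (y - z)) ->
  (forall f x, continuous f x -> continuous (fun r => F r (f r)) x) -> 0 < L ->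
  forall s, 0 <= s -> is_lim_seq (fun n => Pn F n s) (Plim F s) /\
    (forall Sb n, s <= Sb -> Rabs (Plim F s - Pn F n s) <= tau K L Sb n).
Proof.
  intros HK HL HC L0 s hs. assert (K0 : 0 <= K) by (destruct (HK 0 0); lra).
  assert (B : forall Sb n m, s <= Sb -> (n <= m)%nat -> Rabs (Pn F m s - Pn F n s) <= tau K L Sb n).
  { intros Sb n m hS hnm. replace m with (n + (m - n))%nat by lia.
    eapply Rle_trans. apply (Pn_est2 F K L Sb); auto; lra.
    unfold tau. apply Rmult_le_compat_l. unfold Rdiv; apply Rmult_le_pos; auto; left; apply Rinv_0_lt_compat; auto.
    assert (0 <= L * Sb) by (apply Rmult_le_pos; lra).
    generalize (SC_le_exp (L * Sb) (n + (m - n)) H). lra. }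
  assert (Hc : ex_finite_lim_seq (fun n => Pn F n s)).
  { apply ex_lim_seq_cauchy_corr. intros eps.
    destruct (tau_small K L s (eps / 2)) as [N HN]; auto. apply Rdiv_lt_0_compat. apply cond_pos. lra.
    exists N. intros n m hn hm.
    replace (Pn F n s - Pn F m s) with ((Pn F n s - Pn F N s) - (Pn F m s - Pn F N s)) by ring.
    eapply Rle_lt_trans. apply Rabs_triang. rewrite Rabs_Ropp.
    generalize (B s N n (Rle_refl _) hn) (B s N m (Rle_refl _) hm) (HN N (Nat.le_refl _)). lra. }
  destruct Hc as [l Hl].
  assert (E : Plim F s = l). { unfold Plim. rewrite (is_lim_seq_unique _ _ Hl). reflexivity. }
  rewrite E. split; auto.
  intros Sb n hS.
  apply (is_lim_seq_incr_n _ n) in Hl.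
  assert (H2 := is_lim_seq_abs _ _ (is_lim_seq_minus' _ _ _ _ Hl (is_lim_seq_const (Pn F n s)))).
  assert (H3 := is_lim_seq_le _ _ _ _ (fun m => B Sb n (m + n)%nat hS ltac:(lia)) H2 (is_lim_seq_const (tau K L Sb n))).
  simpl in H3. exact H3.
Qed.

Lemma Rmax0_lip x y : Rabs (Rmax y 0 - Rmax x 0) <= Rabs (y - x).
Proof. unfold Rmax; destruct (Rle_dec y 0), (Rle_dec x 0); unfold Rabs; repeat destruct Rcase_abs; lra. Qed.

Lemma Pn_0 F n : Pn F n 0 = 1.
Proof. destruct n; simpl; auto. rewrite RInt_point. apply Rplus_0_r. Qed.

Lemma Rabs_small (z : R) : (forall eps, 0 < eps -> Rabs z < eps) -> z = 0.
Proof.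
  intros H. destruct (Req_dec z 0); auto. exfalso.
  specialize (H (Rabs z) (Rabs_pos_lt z H0)). lra.
Qed.

Theorem picard F K L :
  (forall s y, 0 <= F s y <= K) ->
  (forall s y z, Rabs (F s y - F s z) <= L * Rabs (y - z)) ->
  (forall f x, continuous f x -> continuous (fun r => F r (f r)) x) -> 0 < L ->
  exists P : R -> R, (forall x, continuous P x) /\ (forall s, s <= 0 -> P s = 1) /\
    (forall s, 0 <= s -> P s = 1 + RInt (fun r => F r (P r)) 0 s).
Proof.
  intros HK HL HC L0. assert (K0 : 0 <= K) by (destruct (HK 0 0); lra).
  set (P := fun s => Plim F (Rmax s 0)).
  assert (P0 : forall s, s <= 0 -> P s = 1).
  { intros s hs. unfold P. rewrite Rmax_right by lra.
    destruct (Plim_spec F K L HK HL HC L0 0 (Rle_refl _)) as [H _].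
    apply (is_lim_seq_ext _ (fun _ => 1)) in H. 2: intros; apply Pn_0.
    apply is_lim_seq_unique in H. rewrite Lim_seq_const in H. injection H; auto. }
  assert (Pp : forall s, 0 <= s -> P s = Plim F s).
  { intros s hs. unfold P. rewrite Rmax_left by lra. auto. }
  assert (PC : forall x, continuous P x).
  { intros x. apply cont_eps. intros eps he.
    set (s0 := Rmax x 0). assert (hs0 : 0 <= s0) by (apply Rmax_r).
    destruct (tau_small K L (s0 + 1) (eps / 3)) as [N HN]; auto; try lra.
    specialize (HN N (Nat.le_refl _)).
    destruct (proj1 (cont_eps (Pn F N) s0) (Pn_cont F HC N s0) (eps / 3)) as [d [hd Hd]]. lra.
    exists (Rmin d 1). split. apply Rmin_pos; lra.
    intros y hy. assert (hy1 : Rabs (y - x) < d) by (eapply Rlt_le_trans; [exact hy| apply Rmin_l]).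
    assert (hy2 : Rabs (y - x) < 1) by (eapply Rlt_le_trans; [exact hy| apply Rmin_r]).
    assert (Hl := Rmax0_lip x y). fold s0 in Hl.
    set (ry := Rmax y 0) in *. assert (hry : 0 <= ry) by apply Rmax_r.
    unfold P. fold s0. fold ry.
    assert (hry1 : ry <= s0 + 1) by (assert (Q : Rabs (ry - s0) < 1) by lra; apply Rabs_def2 in Q; lra).
    assert (A1 := proj2 (Plim_spec F K L HK HL HC L0 ry hry) (s0 + 1) N hry1).
    assert (A2 := proj2 (Plim_spec F K L HK HL HC L0 s0 hs0) (s0 + 1) N ltac:(lra)).
    assert (A3 := Hd ry ltac:(lra)).
    replace (Plim F ry - Plim F s0) with ((Plim F ry - Pn F N ry) + (Pn F N ry - Pn F N s0) - (Plim F s0 - Pn F N s0)) by ring.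
    eapply Rle_lt_trans. apply Rabs_triang. rewrite Rabs_Ropp.
    eapply Rle_lt_trans. apply Rplus_le_compat_r. apply Rabs_triang. lra. }
  exists P. split; auto. split; auto.
  intros s hs.
  assert (GC : forall y, continuous (fun r => F r (P r)) y) by (intros; apply HC; auto).
  assert (GnC : forall n y, continuous (fun r => F r (Pn F n r)) y) by (intros; apply HC; apply Pn_cont; auto).
  apply Rminus_diag_uniq. apply Rabs_small. intros eps he.
  assert (c0 : 0 < 1 + s * L) by (generalize (Rmult_le_pos s L hs ltac:(lra)); lra).
  destruct (tau_small K L s (eps / (1 + s * L))) as [N HN]; auto. apply Rdiv_lt_0_compat; lra.
  assert (A1 := proj2 (Plim_spec F K L HK HL HC L0 s hs) s (S N) (Rle_refl _)).
  assert (A2 : Rabs (RInt (fun r => F r (P r)) 0 s - RInt (fun r => F r (Pn F N r)) 0 s) <= s * (L * tau K L s N)).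
  { rewrite <- RInt_minus'; try apply exRI; auto.
    replace s with (s - 0) at 2 by ring.
    apply abs_RInt_le_const; auto. apply exRI. intros; apply cont_minus; auto.
    intros t ht. eapply Rle_trans. apply HL. apply Rmult_le_compat_l. lra.
    rewrite Pp by lra. apply (Plim_spec F K L HK HL HC L0 t ltac:(lra)). lra. }
  assert (A3 : tau K L s (S N) <= tau K L s N).
  { unfold tau. apply Rmult_le_compat_l. unfold Rdiv; apply Rmult_le_pos; auto; left; apply Rinv_0_lt_compat; auto.
    generalize (SC_mono (L * s) N 1 ltac:(apply Rmult_le_pos; lra)). rewrite Nat.add_1_r. lra. }
  assert (A4 := HN N (Nat.le_refl _)).
  rewrite Pp by auto.
  change (Pn F (S N) s) with (1 + RInt (fun r => F r (Pn F N r)) 0 s) in A1.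
  replace (Plim F s - (1 + RInt (fun r => F r (P r)) 0 s)) with
    ((Plim F s - (1 + RInt (fun r => F r (Pn F N r)) 0 s)) - (RInt (fun r => F r (P r)) 0 s - RInt (fun r => F r (Pn F N r)) 0 s)) by ring.
  eapply Rle_lt_trans. apply Rabs_triang. rewrite Rabs_Ropp.
  apply Rmult_lt_compat_l with (r := 1 + s * L) in A4; auto.
  replace ((1 + s * L) * (eps / (1 + s * L))) with eps in A4 by (field; lra).
  assert (0 <= tau K L s N) by (apply tau_pos; auto).
  nra.
Qed.


Lemma cont_div (f g : R -> R) x : continuous f x -> continuous g x -> g x <> 0 ->
  continuous (fun y => f y / g y) x.
Proof.
  intros H1 H2 H3. apply continuity_pt_filterlim.
  apply (continuity_pt_div f g); auto; apply continuity_pt_filterlim; auto.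
Qed.

Lemma cont_rmax (c : R) (f : R -> R) x : continuous f x -> continuous (fun y => Rmax (f y) c) x.
Proof.
  intros H. apply (continuous_comp f (fun z => Rmax z c)); auto.
  apply cont_eps. intros eps he. exists eps; split; auto. intros y hy.
  eapply Rle_lt_trans. 2: exact hy.
  unfold Rmax; destruct (Rle_dec y c), (Rle_dec (f x) c); unfold Rabs; repeat destruct Rcase_abs; lra.
Qed.

Lemma Rpower_1_base p : Rpower 1 p = 1.
Proof. unfold Rpower. rewrite ln_1, Rmult_0_r. apply exp_0. Qed.

Definition pw (p r : R) : R := match Rle_dec r 0 with left _ => 0 | right _ => Rpower r p end.

Lemma pw_pos p r : 0 < r -> pw p r = Rpower r p.
Proof. intros h; unfold pw; destruct (Rle_dec r 0); auto; lra. Qed.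

Lemma pw_bound p r : 0 < p < 1 -> 0 <= r -> 0 <= pw p r <= 1 + r.
Proof.
  intros hp hr. unfold pw. destruct (Rle_dec r 0). lra.
  assert (0 < Rpower r p) by (unfold Rpower; apply exp_pos). split. lra.
  destruct (Rle_lt_dec r 1).
  - assert (Rpower r p <= Rpower 1 p) by (apply Rle_Rpower_l; lra).
    rewrite Rpower_1_base in H0. lra.
  - assert (Rpower r p <= Rpower r 1) by (apply Rle_Rpower; lra).
    rewrite Rpower_1 in H0; lra.
Qed.

Lemma cont_pw p x : 0 < p -> continuous (fun s => pw p (Rmax s 0)) x.
Proof.
  intros hp. destruct (Rtotal_order x 0) as [hx | [hx | hx]].
  - apply (continuous_ext_loc _ (fun _ => 0)). 
    + apply (locally_interval _ x m_infty 0); simpl; auto. intros y _ hy.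
      unfold pw. rewrite Rmax_right by lra. destruct (Rle_dec 0 0); auto; lra.
    + apply continuous_const.
  - subst. apply cont_eps. intros eps he.
    exists (Rpower eps (/ p)). split. unfold Rpower; apply exp_pos.
    intros y hy. rewrite (Rmax_left 0 0) by lra. unfold pw at 2. destruct (Rle_dec 0 0); [|lra].
    rewrite Rminus_0_r. rewrite Rminus_0_r in hy.
    unfold pw. destruct (Rle_dec (Rmax y 0) 0). rewrite Rabs_R0; auto.
    assert (hy0 : 0 < Rmax y 0) by lra.
    assert (Rmax y 0 <= Rabs y) by (unfold Rmax, Rabs; destruct Rle_dec; destruct Rcase_abs; lra).
    rewrite Rabs_right by (left; unfold Rpower; apply exp_pos).
    replace eps with (Rpower (Rpower eps (/ p)) p).
    apply Rlt_Rpower_l; auto. lra.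
    rewrite Rpower_mult. rewrite Rinv_l by lra. apply Rpower_1; auto.
  - apply (continuous_ext_loc _ (fun s => Rpower s p)).
    + apply (locally_interval _ x 0 p_infty); simpl; auto. intros y hy _.
      rewrite Rmax_left by lra. rewrite pw_pos; auto.
    + apply continuity_pt_filterlim. apply derivable_continuous_pt.
      exists (p * Rpower x (p - 1)). apply derivable_pt_lim_power; auto.
Qed.

Definition Fq (a A B p : R) (s y : R) : R :=
  (a * a * (Rmax y 1 * Rmax y 1) + pw p (Rmax s 0)) / (Rmax y 1 * (A * Rmax s 0 + B * Rmax y 1)).

Lemma Fq_cont a A B p : 0 < A -> 0 < B -> 0 < p ->
  forall f x, continuous f x -> continuous (fun r => Fq a A B p r (f r)) x.
Proof.
  intros hA hB hp f x Hf. unfold Fq.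
  assert (C1 : continuous (fun y => Rmax (f y) 1) x) by (apply cont_rmax; auto).
  assert (C2 : continuous (fun y : R => Rmax y 0) x) by (apply cont_rmax; apply continuous_id).
  apply cont_div.
  - apply cont_plus. apply cont_mult. apply continuous_const. apply cont_mult; auto. apply cont_pw; auto.
  - apply cont_mult; auto. apply cont_plus; apply cont_mult; auto; apply continuous_const.
  - assert (1 <= Rmax (f x) 1) by apply Rmax_r. assert (0 <= Rmax x 0) by apply Rmax_r.
    apply Rgt_not_eq. apply Rmult_lt_0_compat. lra. nra.
Qed.

Lemma Fq_bound a A B p : 0 < A -> 0 < B -> 0 < p < 1 ->
  forall s y, 0 <= Fq a A B p s y <= a * a / B + (/ A + / B).
Proof.
  intros hA hB hp s y. unfold Fq.
  set (q := Rmax y 1). set (r := Rmax s 0). set (w := pw p r).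
  assert (hq : 1 <= q) by apply Rmax_r. assert (hr : 0 <= r) by apply Rmax_r.
  assert (hw := pw_bound p r hp hr). fold w in hw.
  assert (hD : 0 < A * r + B * q) by nra.
  replace ((a * a * (q * q) + w) / (q * (A * r + B * q))) with
    (a * a * q / (A * r + B * q) + w / q / (A * r + B * q)) by (field; lra).
  assert (T1 : 0 <= a * a * q / (A * r + B * q) <= a * a / B).
  { split. apply Rdiv_le_0_compat; nra.
    apply Rmult_le_reg_r with (A * r + B * q); auto. unfold Rdiv. rewrite Rmult_assoc, Rinv_l by lra.
    apply Rmult_le_reg_r with B; auto.
    replace (a * a * / B * (A * r + B * q) * B) with (a * a * (A * r + B * q)) by (field; lra).
    assert (0 <= a * a) by nra. assert (0 <= a * a * (A * r)) by (apply Rmult_le_pos; nra). nra. }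
  assert (T2 : 0 <= w / q / (A * r + B * q) <= / A + / B).
  { split. apply Rdiv_le_0_compat; [apply Rdiv_le_0_compat|]; lra.
    apply Rmult_le_reg_r with (A * r + B * q); auto. unfold Rdiv. rewrite Rmult_assoc, Rinv_l by lra.
    rewrite Rmult_1_r. 
    assert (w * / q <= w) by (apply Rmult_le_reg_r with q; [lra|]; rewrite Rmult_assoc, Rinv_l by lra; nra).
    assert ((/ A + / B) * (A * r + B * q) >= 1 + r).
    { replace ((/ A + / B) * (A * r + B * q)) with (r + B * q / A + A * r / B + q) by (field; lra).
      assert (0 <= B * q / A) by (apply Rdiv_le_0_compat; nra).
      assert (0 <= A * r / B) by (apply Rdiv_le_0_compat; nra). lra. }
    lra. }
  lra.
Qed.

Lemma div_le_aux (n d M : R) : 0 < d -> n <= M * d -> n / d <= M.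
Proof. intros hd h. apply Rmult_le_reg_r with d; auto. unfold Rdiv. rewrite Rmult_assoc, Rinv_l by lra. lra. Qed.

Lemma Rmax1_lip y z : Rabs (Rmax y 1 - Rmax z 1) <= Rabs (y - z).
Proof. unfold Rmax; destruct (Rle_dec y 1), (Rle_dec z 1); unfold Rabs; repeat destruct Rcase_abs; lra. Qed.

Lemma Fq_lip a A B p : 0 < A -> 0 < B -> 0 < p < 1 ->
  forall s y z, Rabs (Fq a A B p s y - Fq a A B p s z) <= (a * a / B + 2 * (/ A + / B)) * Rabs (y - z).
Proof.
  intros hA hB hp s y z. unfold Fq.
  set (q := Rmax y 1). set (q' := Rmax z 1). set (r := Rmax s 0). set (w := pw p r).
  assert (hq : 1 <= q) by apply Rmax_r. assert (hq' : 1 <= q') by apply Rmax_r. assert (hr : 0 <= r) by apply Rmax_r.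
  assert (hw := pw_bound p r hp hr). fold w in hw.
  set (D1 := A * r + B * q). set (D2 := A * r + B * q').
  assert (hD1 : A * r + B <= D1) by (unfold D1; nra). assert (hD2 : A * r + B <= D2) by (unfold D2; nra).
  assert (hAr : 0 <= A * r) by nra.
  set (X := a * a * (A * r) / (D1 * D2)).
  set (Y := w * (A * r + B * q + B * q') / (q * q' * (D1 * D2))).
  assert (E : (a * a * (q * q) + w) / (q * D1) - (a * a * (q' * q') + w) / (q' * D2) = (q - q') * (X - Y)).
  { unfold X, Y, D1, D2. field. repeat split; nra. }
  rewrite E, Rabs_mult, Rmult_comm. apply Rmult_le_compat. apply Rabs_pos. apply Rabs_pos. 2: apply Rmax1_lip.
  set (M := / A + / B).
  assert (hM : w <= M * (A * r + B)).
  { unfold M. replace ((/ A + / B) * (A * r + B)) with (r + B / A + A * r / B + 1) by (field; lra).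
    assert (0 <= B / A) by (apply Rdiv_le_0_compat; lra).
    assert (0 <= A * r / B) by (apply Rdiv_le_0_compat; nra). lra. }
  assert (hX : 0 <= X <= a * a / B).
  { unfold X. split. apply Rdiv_le_0_compat. assert (0 <= a * a) by nra. nra. nra.
    apply div_le_aux. nra. 
    unfold Rdiv. assert (0 <= a * a) by nra.
    assert (B * (A * r) <= D1 * D2) by nra.
    assert (a * a * (B * (A * r)) <= a * a * (D1 * D2)) by (apply Rmult_le_compat_l; auto).
    replace (a * a * / B * (D1 * D2)) with (a * a * (D1 * D2) / B) by (field; lra).
    apply Rmult_le_reg_r with B; auto. replace (a * a * (D1 * D2) / B * B) with (a * a * (D1 * D2)) by (field; lra). nra. }
  assert (hY : 0 <= Y <= 2 * M).
  { unfold Y. destruct hw as [hw0 hw1]. split. apply Rdiv_le_0_compat. apply Rmult_le_pos; nra. apply Rmult_lt_0_compat; nra.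
    apply div_le_aux. apply Rmult_lt_0_compat; nra.
    assert (w * (A * r + B * q + B * q') <= w * (D1 + D2)) by (apply Rmult_le_compat_l; unfold D1, D2; nra).
    assert (hM0 : 0 <= M) by (unfold M; assert (0 < / A) by (apply Rinv_0_lt_compat; lra); assert (0 < / B) by (apply Rinv_0_lt_compat; lra); lra).
    assert (w * D1 <= M * (D1 * D2)).
    { apply Rle_trans with (M * (A * r + B) * D1). apply Rmult_le_compat_r; nra.
      rewrite (Rmult_comm D1 D2), <- Rmult_assoc. apply Rmult_le_compat_r. nra. apply Rmult_le_compat_l; nra. }
    assert (w * D2 <= M * (D1 * D2)).
    { apply Rle_trans with (M * (A * r + B) * D2). apply Rmult_le_compat_r; nra.
      rewrite <- Rmult_assoc. apply Rmult_le_compat_r. nra. apply Rmult_le_compat_l; nra. }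
    assert (1 <= q * q') by nra.
    assert (0 <= M * (D1 * D2)) by nra.
    nra. }
  unfold Rabs; destruct Rcase_abs; lra.
Qed.


Lemma cont_inv (f : R -> R) x : continuous f x -> f x <> 0 -> continuous (fun y => / f y) x.
Proof.
  intros H1 H2. apply continuity_pt_filterlim.
  apply (continuity_pt_inv f); auto; apply continuity_pt_filterlim; auto.
Qed.

Lemma isd_RInt_inv_lin K x : 0 < K -> 0 <= x ->
  is_derive (fun r => ln (1 + K * r) / K) x (/ (1 + K * x)).
Proof.
  intros hK hx. auto_derive. nra. field. split; nra.
Qed.

Lemma mono_strict (T : R -> R) dT : (forall x, is_derive T x (dT x)) -> (forall x, 0 < dT x) ->
  forall x y, x < y -> T x < T y.
Proof.
  intros D P x y hxy. destruct (MVT_gen T x y dT) as [c [hc E]].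
  - intros; auto.
  - intros z _. apply continuity_pt_filterlim. apply (ex_derive_continuous (V:=R_NormedModule)). eexists; apply D.
  - rewrite Rmin_left, Rmax_right in hc by lra. specialize (P c). nra.
Qed.

Theorem ode_solution a A B p : 0 < A -> 0 < B -> 0 < p < 1 ->
  exists P g : R -> R,
    (forall s, 1 <= P s) /\
    (forall s, 0 < s -> is_derive P s ((a * a * (P s * P s) + Rpower s p) / (P s * (A * s + B * P s)))) /\
    g 0 = 0 /\ (forall t, 0 < t -> 0 < g t) /\ (forall t, is_derive g t (P (g t))).
Proof.
  intros hA hB hp.
  set (F := Fq a A B p). set (K := a * a / B + (/ A + / B)). set (L := a * a / B + 2 * (/ A + / B)).
  assert (hiA : 0 < / A) by (apply Rinv_0_lt_compat; lra). assert (hiB : 0 < / B) by (apply Rinv_0_lt_compat; lra).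
  assert (haB : 0 <= a * a / B) by (apply Rdiv_le_0_compat; nra).
  assert (hK : 0 < K) by (unfold K; lra). assert (hL : 0 < L) by (unfold L; lra).
  destruct (picard F K L (Fq_bound a A B p hA hB hp) (Fq_lip a A B p hA hB hp)
      (Fq_cont a A B p hA hB ltac:(lra)) hL) as [P [PC [P0 PI]]].
  assert (GC : forall y, continuous (fun r => F r (P r)) y) by (intros; apply Fq_cont; auto; lra).
  assert (P1 : forall s, 1 <= P s).
  { intros s. destruct (Rle_lt_dec s 0). rewrite P0; lra.
    rewrite PI by lra. assert (0 <= RInt (fun r => F r (P r)) 0 s). 
    apply RInt_ge_0. lra. apply exRI; auto. intros; apply Fq_bound; auto. lra. }
  assert (Pub : forall s, 0 <= s -> P s <= 1 + K * s).
  { intros s hs. rewrite PI by auto.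
    assert (H := abs_RInt_le_const (fun r => F r (P r)) 0 s K hs (exRI _ _ _ GC)).
    assert (H' : Rabs (RInt (fun r => F r (P r)) 0 s) <= (s - 0) * K).
    apply H. intros t _. rewrite Rabs_right. apply Fq_bound; auto. apply Rle_ge, Fq_bound; auto.
    generalize (Rle_abs (RInt (fun r => F r (P r)) 0 s)). lra. }
  exists P.
  assert (PD : forall s, 0 < s -> is_derive P s (F s (P s))).
  { intros s hs. apply (is_derive_ext_loc (fun s => 1 + RInt (fun r => F r (P r)) 0 s)).
    - generalize (pos_locally s hs). apply filter_imp. intros x hx. rewrite PI; auto; lra.
    - eapply isd_eq. 2: apply isd_plus. 2: apply isd_const. 2: apply RInt_cont_derive; auto. ring. }
  assert (PD' : forall s, 0 < s -> is_derive P s ((a * a * (P s * P s) + Rpower s p) / (P s * (A * s + B * P s)))).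
  { intros s hs. eapply isd_eq. 2: apply PD; auto. unfold F, Fq.
    rewrite (Rmax_left (P s)) by (generalize (P1 s); lra). rewrite (Rmax_left s) by lra.
    rewrite pw_pos; auto. }
  set (T := (fun s => RInt (fun r => / P r) 0 s) : R -> R).
  assert (IC : forall y, continuous (fun r => / P r) y).
  { intros y. apply cont_inv. auto. generalize (P1 y); lra. }
  assert (TD : forall s, is_derive T s (/ P s)) by (intros s; unfold T; apply (RInt_cont_derive (fun r => / P r)); auto).
  assert (Tinc : forall x y, x < y -> T x < T y).
  { apply (mono_strict T (fun s => / P s)); auto. intros; apply Rinv_0_lt_compat; generalize (P1 x); lra. }
  assert (T0 : T 0 = 0) by (unfold T; rewrite RInt_point; reflexivity).
  assert (Tneg : forall s, s <= 0 -> T s = s).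
  { intros s hs. unfold T. rewrite (RInt_ext _ (fun _ => 1)). rewrite RInt_const. simpl. change (scal (s - 0) 1) with ((s - 0) * 1). ring.
    intros x hx. rewrite Rmin_right, Rmax_left in hx by lra. rewrite P0 by lra. apply Rinv_1. }
  assert (Tge : forall s, 0 <= s -> ln (1 + K * s) / K <= T s).
  { intros s hs.
    replace (ln (1 + K * s) / K) with (RInt (fun r => / (1 + K * r)) 0 s).
    - apply RInt_le; auto. apply (@ex_RInt_continuous R_CompleteNormedModule). intros y hy.
      rewrite Rmin_left, Rmax_right in hy by lra. apply cont_inv.
      apply continuity_pt_filterlim. apply derivable_continuous_pt. apply derivable_pt_plus. apply derivable_pt_const.
      apply derivable_pt_mult. apply derivable_pt_const. apply derivable_pt_id. 
      nra. apply exRI; auto.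
      intros x hx. apply Rinv_le_contravar. generalize (P1 x); lra. apply Pub. lra.
    - apply is_RInt_unique.
      assert (H : is_RInt (fun r => / (1 + K * r)) 0 s (minus (ln (1 + K * s) / K) (ln (1 + K * 0) / K))).
      { apply (is_RInt_derive (fun r => ln (1 + K * r) / K)). intros x hx. rewrite Rmin_left in hx by lra. apply isd_RInt_inv_lin; lra.
        intros x hx. rewrite Rmin_left in hx by lra. apply cont_inv.
        apply continuity_pt_filterlim. apply derivable_continuous_pt. apply derivable_pt_plus. apply derivable_pt_const.
        apply derivable_pt_mult. apply derivable_pt_const. apply derivable_pt_id. nra. }
      unfold minus, plus, opp in H; simpl in H. rewrite Rmult_0_r, Rplus_0_r, ln_1 in H.
      replace (ln (1 + K * s) / K) with (ln (1 + K * s) / K + - (0 / K)) by (field; lra). exact H. }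
  assert (TC : continuity T).
  { intros x. apply continuity_pt_filterlim. apply (ex_derive_continuous (V:=R_NormedModule)). eexists; apply TD. }
  assert (Tsurj : forall t, exists s, T s = t).
  { intros t. destruct (Rle_lt_dec t 0) as [ht|ht]. exists t; auto.
    set (b := (exp (K * t) - 1) / K).
    assert (hb : 0 <= b). { unfold b. apply Rdiv_le_0_compat; auto.
      assert (1 <= exp (K * t)). { rewrite <- exp_0. left; apply exp_increasing. nra. } lra. }
    assert (Tb : t <= T b).
    { eapply Rle_trans. 2: apply Tge; auto. unfold b.
      replace (1 + K * ((exp (K * t) - 1) / K)) with (exp (K * t)) by (field; lra).
      rewrite ln_exp. right; field; lra. }
    destruct (IVT_gen T 0 b t TC) as [x [_ hx]].
    rewrite T0. rewrite Rmin_left, Rmax_right; lra.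
    exists x; auto. }
  set (g := fun t => proj1_sig (constructive_indefinite_description _ (Tsurj t))).
  assert (gT : forall t, T (g t) = t) by (intros; unfold g; destruct constructive_indefinite_description; simpl; auto).
  assert (Tle : forall x y, x <= y -> T x <= T y) by (intros x y h; destruct h; [left; apply Tinc; auto | subst; lra]).
  assert (Tinj : forall x y, T x = T y -> x = y).
  { intros x y E. destruct (Rtotal_order x y) as [h|[h|h]]; auto; apply Tinc in h; lra. }
  assert (gTs : forall s, g (T s) = s) by (intros; apply Tinj; auto).
  assert (gmono : forall t1 t2, t1 <= t2 -> g t1 <= g t2).
  { intros t1 t2 h. destruct (Rle_lt_dec (g t1) (g t2)); auto. apply Tinc in r. rewrite !gT in r. lra. }
  assert (gcont : forall t, continuity_pt g t).
  { intros t. apply (Ranalysis5.continuity_pt_recip_interv T g (g t - 1) (g t + 1)).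
    - lra.
    - intros x y _ h _. apply Tinc; auto.
    - intros x _ _. apply gT.
    - intros x h1 h2. apply gmono in h1. apply gmono in h2. rewrite gTs in h1, h2. lra.
    - intros; apply TC.
    - split; [rewrite <- (gT t) at 2 | rewrite <- (gT t) at 1]; apply Tinc; lra. }
  exists g. split; auto. split; auto. split.
  { apply Tinj. rewrite gT; auto. }
  split.
  { intros t ht. destruct (Rle_lt_dec (g t) 0) as [h|h]; auto. apply Tle in h. rewrite gT, T0 in h. lra. }
  intros t.
  set (dT := fun y => exist (fun l => derivable_pt_lim T y l) (/ P y) (proj1 (is_derive_Reals T y (/ P y)) (TD y))).
  assert (h1 : t - 1 < t + 1) by lra. assert (h2 : t - 1 < t < t + 1) by lra.
  assert (h3 : g (t - 1) <= g t) by (apply gmono; lra). assert (h4 : g t <= g (t + 1)) by (apply gmono; lra).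
  assert (Hg := Ranalysis5.derivable_pt_lim_recip_interv T g (t - 1) (t + 1) t (fun a _ => dT a) (gcont t)
     h1 h2 (conj h3 h4) (fun x _ => gT x)).
  apply is_derive_Reals. simpl in Hg.
  replace (P (g t)) with (1 / / P (g t)). apply Hg.
  apply Rgt_not_eq, Rinv_0_lt_compat. generalize (P1 (g t)); lra.
  field. generalize (P1 (g t)); lra.
Qed.


Lemma smooth_P a A B p (P : R -> R) : 0 < A -> 0 < B ->
  (forall s, 1 <= P s) ->
  (forall s, 0 < s -> is_derive P s ((a * a * (P s * P s) + Rpower s p) / (P s * (A * s + B * P s)))) ->
  Cinf P.
Proof.
  intros hA hB P1 PD n. induction n.
  - intros x hx. apply (ex_derive_continuous (V:=R_NormedModule)). eexists; apply PD; auto.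
  - exists (fun s => (a * a * (P s * P s) + Rpower s p) / (P s * (A * s + B * P s))). split; auto.
    apply Cn_mult.
    + apply Cn_plus. apply Cn_mult. apply Cn_const. apply Cn_mult; auto. apply Cn_rpow.
    + apply Cn_inv. intros x hx. generalize (P1 x); intros. apply Rgt_not_eq. apply Rmult_lt_0_compat; nra.
      apply Cn_mult; auto. apply Cn_plus; apply Cn_mult; auto; try apply Cn_const. apply Cn_id.
Qed.

Lemma smooth_g (P g : R -> R) : Cinf P -> (forall t, 0 < t -> 0 < g t) ->
  (forall t, is_derive g t (P (g t))) -> Cinf g.
Proof.
  intros CP gp gd n. induction n.
  - intros x hx. apply (ex_derive_continuous (V:=R_NormedModule)). eexists; apply gd; auto.
  - exists (fun t => P (g t)). split; auto. apply Cn_comp; auto.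
Qed.


Lemma cont_rpow_pt c y : 0 < y -> continuous (fun y => Rpower y c) y.
Proof.
  intros hy. apply continuity_pt_filterlim. apply derivable_continuous_pt.
  exists (c * Rpower y (c - 1)). apply derivable_pt_lim_power; auto.
Qed.

Lemma cont_ln_pt y : 0 < y -> continuous ln y.
Proof.
  intros hy. apply continuity_pt_filterlim. apply derivable_continuous_pt.
  exists (/ y). apply derivable_pt_lim_ln; auto.
Qed.

Lemma cont_class (be c : R) (phi : R -> R) (z : R * R) : 0 < snd z -> 0 < fst z + be * ln (snd z) ->
  (forall t, 0 < t -> continuous phi t) ->
  continuous (fun z : R * R => Rpower (snd z) c * phi (fst z + be * ln (snd z))) z.
Proof.
  destruct z as [x y]; simpl. intros hy ht hphi.
  apply (continuous_mult (K := R_AbsRing) (fun z : R * R => Rpower (snd z) c) (fun z : R * R => phi (fst z + be * ln (snd z)))).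
  - apply (continuous_comp (fun z : R * R => snd z) (fun y => Rpower y c)). apply continuous_snd.
    apply cont_rpow_pt; auto.
  - apply (continuous_comp (fun z : R * R => fst z + be * ln (snd z)) phi).
    + apply (continuous_plus (fun z : R * R => fst z) (fun z : R * R => be * ln (snd z))).
      apply continuous_fst.
      apply (continuous_scal_r be (fun z : R * R => ln (snd z))).
      apply (continuous_comp (fun z : R * R => snd z) ln). apply continuous_snd. apply cont_ln_pt; auto.
    + apply hphi; auto.
Qed.

Lemma sigma_t be z : Sigma be 1 z -> 0 < snd z /\ 0 < fst z + be * ln (snd z).
Proof.
  unfold Sigma. intros [hy h]. split; auto. unfold Rpower in h. rewrite <- exp_plus in h.
  apply exp_lt_inv. rewrite exp_0. lra.
Qed.

Lemma sigma_t_rev be x y : 0 < y -> 0 < x + be * ln y -> Sigma be 1 (x, y).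
Proof.
  intros hy h. unfold Sigma; simpl. split; auto. unfold Rpower. rewrite <- exp_plus.
  rewrite <- exp_0. apply Rlt_gt, exp_increasing. auto.
Qed.

Lemma Rpower_m1 y c : 0 < y -> Rpower y c = Rpower y (c - 1) * y.
Proof.
  intros hy. rewrite <- (Rpower_1 y) at 3 by auto. rewrite <- Rpower_plus. f_equal; ring.
Qed.

Lemma isd_x be (phi : R -> R) y x dphi c : is_derive phi (x + be * ln y) dphi ->
  is_derive (fun s => Rpower y c * phi (s + be * ln y)) x (Rpower y c * dphi).
Proof.
  intros H. apply is_derive_scal. apply (isd_eq _ _ (1 * dphi)). ring.
  apply (isd_comp phi (fun s => s + be * ln y)); auto.
  apply (isd_eq _ _ (1 + 0)). ring. apply isd_plus. apply isd_id. apply isd_const.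
Qed.

Lemma isd_y be (phi : R -> R) y x dphi c : 0 < y -> is_derive phi (x + be * ln y) dphi ->
  is_derive (fun t => Rpower t c * phi (x + be * ln t)) y
    (Rpower y (c - 1) * (c * phi (x + be * ln y) + be * dphi)).
Proof.
  intros hy H.
  assert (D1 : is_derive (fun t => x + be * ln t) y (0 + be * / y)).
  { apply isd_plus. apply isd_const. apply is_derive_scal, is_derive_ln; auto. }
  assert (D2 := isd_comp phi (fun t => x + be * ln t) y dphi _ H D1).
  assert (D3 : is_derive (fun t => Rpower t c) y (c * Rpower y (c - 1))) by (apply is_derive_Reals, derivable_pt_lim_power; auto).
  assert (D4 := isd_mult _ _ y _ _ D3 D2). simpl in D4.
  eapply isd_eq. 2: exact D4.
  rewrite (Rpower_m1 y c hy). field. lra.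
Qed.

Lemma Ck2_class be k : forall c phi, Cinf phi ->
  Ck2 k (Sigma be 1) (fun z => Rpower (snd z) c * phi (fst z + be * ln (snd z))).
Proof.
  induction k; intros c phi Cp.
  - simpl. intros z hz. destruct (sigma_t be z hz). apply cont_class; auto. apply (Cn_cont 0). apply Cp.
  - simpl. split.
    { intros z hz. destruct (sigma_t be z hz). apply cont_class; auto. apply (Cn_cont 0). apply Cp. }
    destruct (Cinf_der phi Cp) as [Dp Cd].
    exists (fun z => Rpower (snd z) c * Derive phi (fst z + be * ln (snd z))).
    exists (fun z => Rpower (snd z) (c - 1) * (fun t => c * phi t + be * Derive phi t) (fst z + be * ln (snd z))).
    split; [|split].
    + intros z hz. destruct (sigma_t be z hz) as [hy ht]. destruct z as [x y]; simpl in *. split.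
      * apply isd_x. apply Dp; auto.
      * apply isd_y; auto.
    + apply IHk; auto.
    + apply (IHk (c - 1) (fun t => c * phi t + be * Derive phi t)). intros n. apply Cn_plus; apply Cn_mult; auto; apply Cn_const.
Qed.


Lemma Derive2_loc (f f1 : R -> R) x l : locally x (fun s => is_derive f s (f1 s)) -> is_derive f1 x l ->
  Derive_n f 2 x = l.
Proof.
  intros H1 H2. simpl. rewrite (Derive_ext_loc _ f1).
  apply is_derive_unique; auto.
  apply (filter_imp (fun s => is_derive f s (f1 s))); auto.
  intros s hs. apply is_derive_unique. auto.
Qed.


Lemma hess_formula a be p (P g : R -> R) :
  a * p = 2 * a - 2 -> 0 < a * (a - 1) -> be < 0 ->
  (forall s, 1 <= P s) ->
  (forall s, 0 < s -> is_derive P s ((a * a * (P s * P s) + Rpower s p) / (P s * (a * (a - 1) * s + - be * P s)))) ->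
  (forall t, 0 < t -> 0 < g t) -> (forall t, is_derive g t (P (g t))) ->
  forall z, Sigma be 1 z ->
  hess_det (fun z => Rpower (snd z) a * g (fst z + be * ln (snd z))) z =
    Rpower (Rpower (snd z) a * g (fst z + be * ln (snd z))) p.
Proof.
  intros hap hA hbe P1 PD gp gd z hz.
  destruct (sigma_t be z hz) as [hy ht]. destruct z as [x y]; simpl in *.
  set (Phi0 := fun s => (a * a * (P s * P s) + Rpower s p) / (P s * (a * (a - 1) * s + - be * P s))).
  set (G1 := fun t => P (g t)). set (G2 := fun t => Phi0 (g t) * P (g t)).
  assert (D1 : forall t, 0 < t -> is_derive G1 t (G2 t)).
  { intros t htt. unfold G1, G2. rewrite Rmult_comm. apply (isd_comp P g t). apply PD; auto. auto. }
  set (t := x + be * ln y) in *.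
  unfold hess_det, d_xx, d_yy, d_xy. simpl.
  assert (Exx : Derive_n (fun s => Rpower y a * g (s + be * ln y)) 2 x = Rpower y a * G2 t).
  { apply (Derive2_loc _ (fun s => Rpower y a * G1 (s + be * ln y))).
    apply filter_forall. intros s. apply (isd_x be g). apply gd.
    apply (isd_x be G1). apply D1; auto. }
  assert (Eyy : Derive_n (fun s => Rpower s a * g (x + be * ln s)) 2 y =
     Rpower y (a - 1 - 1) * ((a - 1) * (a * g t + be * G1 t) + be * (a * G1 t + be * G2 t))).
  { apply (Derive2_loc _ (fun s => Rpower s (a - 1) * (fun u => a * g u + be * G1 u) (x + be * ln s))).
    generalize (pos_locally y hy). apply filter_imp. intros s hs. apply (isd_y be g); [auto | apply gd].
    apply (isd_y be (fun u => a * g u + be * G1 u)); auto. apply isd_plus. apply is_derive_scal, gd. apply is_derive_scal, D1; auto. }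
  assert (Exy : Derive (fun s => Derive (fun s0 => Rpower s a * g (s0 + be * ln s)) x) y =
      Rpower y (a - 1) * (a * G1 t + be * G2 t)).
  { rewrite (Derive_ext _ (fun s => Rpower s a * G1 (x + be * ln s))).
    apply is_derive_unique. apply (isd_y be G1); auto.
    intros s. apply is_derive_unique. apply (isd_x be g). apply gd. }
  simpl in Exx, Eyy. rewrite Exx, Eyy, Exy.
  set (Y1 := Rpower y (a - 1)).
  assert (HY : Rpower y a = Y1 * y) by (apply Rpower_m1; auto).
  assert (HY2 : Rpower y (a - 1 - 1) * y = Y1) by (unfold Y1; rewrite (Rpower_m1 y (a - 1)); auto).
  assert (hgt := gp t ht). assert (hP := P1 (g t)).
  assert (hY1 : 0 < Y1) by (unfold Y1, Rpower; apply exp_pos).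
  rewrite <- Rpower_mult_distr. 2: (rewrite HY; nra). 2: auto.
  rewrite Rpower_mult. rewrite hap.
  replace (2 * a - 2) with ((a - 1) + (a - 1)) by ring. rewrite Rpower_plus. fold Y1.
  rewrite HY. rewrite <- HY2.
  unfold G2, G1, Phi0.
  assert (0 < a * (a - 1) * g t) by (apply Rmult_lt_0_compat; auto). assert (0 < - be * P (g t)) by (apply Rmult_lt_0_compat; lra).
  field. split; lra.
Qed.


Lemma convex_1d (f df d2f : R -> R) :
  (forall t, 0 <= t <= 1 -> is_derive f t (df t)) ->
  (forall t, 0 <= t <= 1 -> is_derive df t (d2f t)) ->
  (forall t, 0 <= t <= 1 -> 0 <= d2f t) ->
  forall t, 0 <= t <= 1 -> f t <= t * f 1 + (1 - t) * f 0.
Proof.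
  intros D1 D2 Pos.
  assert (Mono : forall x y, 0 <= x -> x <= y -> y <= 1 -> df x <= df y).
  { intros x y h1 h2 h3. destruct h2 as [h2|h2]; [|subst; lra].
    destruct (MVT_gen df x y d2f) as [c [hc E]].
    - rewrite Rmin_left, Rmax_right by lra. intros; apply D2; lra.
    - rewrite Rmin_left, Rmax_right by lra. intros z hz. apply continuity_pt_filterlim.
      apply (ex_derive_continuous (V:=R_NormedModule)). eexists; apply D2; lra.
    - rewrite Rmin_left, Rmax_right in hc by lra. assert (0 <= d2f c) by (apply Pos; lra). nra. }
  intros t ht.
  destruct (Req_dec t 0) as [->|h0]. lra. destruct (Req_dec t 1) as [->|h1]. lra.
  destruct (MVT_gen f 0 t df) as [c1 [hc1 E1]].
  - rewrite Rmin_left, Rmax_right by lra. intros; apply D1; lra.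
  - rewrite Rmin_left, Rmax_right by lra. intros z hz. apply continuity_pt_filterlim.
    apply (ex_derive_continuous (V:=R_NormedModule)). eexists; apply D1; lra.
  - destruct (MVT_gen f t 1 df) as [c2 [hc2 E2]].
    + rewrite Rmin_left, Rmax_right by lra. intros; apply D1; lra.
    + rewrite Rmin_left, Rmax_right by lra. intros z hz. apply continuity_pt_filterlim.
      apply (ex_derive_continuous (V:=R_NormedModule)). eexists; apply D1; lra.
    + rewrite Rmin_left, Rmax_right in hc1, hc2 by lra.
      assert (M := Mono c1 c2 ltac:(lra) ltac:(lra) ltac:(lra)).
      assert (t * (1 - t) * (df c2 - df c1) >= 0).
      { apply Rle_ge, Rmult_le_pos. apply Rmult_le_pos; lra. lra. }
      nra.
Qed.

Lemma quad_nonneg G2 G1 w e C a : 0 < G2 -> 0 <= G2 * C - a * a * (G1 * G1) ->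
  0 <= G2 * (w * w) + 2 * a * e * w * G1 + C * (e * e).
Proof.
  intros h1 h2.
  assert (0 <= G2 * (G2 * (w * w) + 2 * a * e * w * G1 + C * (e * e))).
  { replace (G2 * (G2 * (w * w) + 2 * a * e * w * G1 + C * (e * e))) with
      ((G2 * w + a * G1 * e) * (G2 * w + a * G1 * e) + (G2 * C - a * a * (G1 * G1)) * (e * e)) by ring.
    apply Rplus_le_le_0_compat. apply Rle_0_sqr. apply Rmult_le_pos; auto. apply Rle_0_sqr. }
  apply Rmult_le_reg_l with G2; auto. lra.
Qed.

Definition Xs (a1 b1 t : R) : R := t * a1 + (1 - t) * b1.

Lemma isd_Xs a1 b1 t : is_derive (Xs a1 b1) t (a1 - b1).
Proof.
  unfold Xs. apply (isd_eq _ _ ((1 * a1 + t * 0) + ((0 + - (1)) * b1 + (1 - t) * 0))). ring.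
  apply isd_plus. apply (isd_mult (fun t => t) (fun _ => a1)). apply isd_id. apply isd_const.
  apply (isd_mult (fun t => 1 - t) (fun _ => b1)).
  apply (is_derive_minus (fun _ => 1) (fun t => t)). apply isd_const. apply isd_id.
  apply isd_const.
Qed.

Lemma seg_derivs a be p (P g : R -> R) a1 a2 b1 b2 t :
  0 < a * (a - 1) -> be < 0 ->
  (forall s, 1 <= P s) ->
  (forall s, 0 < s -> is_derive P s ((a * a * (P s * P s) + Rpower s p) / (P s * (a * (a - 1) * s + - be * P s)))) ->
  (forall t, 0 < t -> 0 < g t) -> (forall t, is_derive g t (P (g t))) ->
  0 < Xs a2 b2 t -> 0 < Xs a1 b1 t + be * ln (Xs a2 b2 t) ->
  let Y := Xs a2 b2 in let T := fun t => Xs a1 b1 t + be * ln (Xs a2 b2 t) in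
  let dX := a1 - b1 in let dY := a2 - b2 in
  let Phi0 := fun s => (a * a * (P s * P s) + Rpower s p) / (P s * (a * (a - 1) * s + - be * P s)) in
  let G1 := fun t => P (g t) in let G2 := fun t => Phi0 (g t) * P (g t) in
  let psi1 := fun t => Rpower (Y t) (a - 1) * (a * dY * g (T t) + G1 (T t) * (dX * Y t + be * dY)) in
  let w := fun t => dX + be * (dY / Y t) in let e := fun t => dY / Y t in
  let psi2 := fun t => Rpower (Y t) (a - 1 - 1) * (Y t * Y t) *
      (G2 (T t) * (w t * w t) + 2 * a * e t * w t * G1 (T t) + (a * (a - 1) * g (T t) - be * G1 (T t)) * (e t * e t)) in
  is_derive (fun t => Rpower (Y t) a * g (T t)) t (psi1 t) /\ is_derive psi1 t (psi2 t) /\ 0 <= psi2 t.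
Proof.
  intros hA hbe P1 PD gp gd hY hT Y T dX dY Phi0 G1 G2 psi1 w e psi2.
  change (0 < Y t) in hY. change (0 < T t) in hT.
  assert (HY : is_derive Y t dY) by apply isd_Xs.
  assert (HX : is_derive (Xs a1 b1) t dX) by apply isd_Xs.
  assert (HT : is_derive T t (dX + be * (dY * / Y t))).
  { apply isd_plus; auto. apply is_derive_scal. apply (isd_comp ln Y). apply is_derive_ln; auto. auto. }
  assert (HYa : forall c, is_derive (fun t => Rpower (Y t) c) t (dY * (c * Rpower (Y t) (c - 1)))).
  { intros c. apply (isd_comp (fun y => Rpower y c) Y); auto. apply is_derive_Reals, derivable_pt_lim_power; auto. }
  assert (hg := gp _ hT). assert (hP := P1 (g (T t))).
  assert (HG1 : is_derive G1 (T t) (G2 (T t))).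
  { unfold G1, G2. rewrite Rmult_comm. apply (isd_comp P g). apply PD; auto. auto. }
  assert (Ym := Rpower_m1 (Y t) a hY). assert (Ym2 := Rpower_m1 (Y t) (a - 1) hY).
  split; [|split].
  - eapply isd_eq. 2: apply isd_mult. 2: apply HYa. 2: apply (isd_comp g T); [apply gd | apply HT].
    unfold psi1. rewrite Ym. unfold G1. field. lra.
  - eapply isd_eq. 2: apply isd_mult. 2: apply HYa.
    2: { apply isd_plus. apply is_derive_scal. apply (isd_comp g T); [apply gd | apply HT].
         apply isd_mult. apply (isd_comp G1 T); [apply HG1 | apply HT].
         apply isd_plus. apply is_derive_scal, HY. apply isd_const. }
    unfold psi2, w, e. rewrite Ym2. unfold G1. field. lra.
  - unfold psi2. apply Rmult_le_pos. apply Rmult_le_pos. left; unfold Rpower; apply exp_pos. nra.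
    assert (hG2 : 0 < G2 (T t)).
    { unfold G2, Phi0. apply Rmult_lt_0_compat. 2: lra. apply Rdiv_lt_0_compat.
      assert (0 < Rpower (g (T t)) p) by (unfold Rpower; apply exp_pos). nra.
      assert (0 < a * (a - 1) * g (T t)) by (apply Rmult_lt_0_compat; auto). nra. }
    apply quad_nonneg; auto.
    assert (E : G2 (T t) * (a * (a - 1) * g (T t) - be * G1 (T t)) - a * a * (G1 (T t) * G1 (T t)) = Rpower (g (T t)) p).
    { unfold G2, G1, Phi0.
      assert (0 < a * (a - 1) * g (T t)) by (apply Rmult_lt_0_compat; auto). assert (0 < - be * P (g (T t))) by (apply Rmult_lt_0_compat; lra).
      field. split; lra. }
    rewrite E. left; unfold Rpower; apply exp_pos.
Qed.


Lemma cont_class' (be c : R) (phi : R -> R) (z : R * R) : 0 < snd z ->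
  continuous phi (fst z + be * ln (snd z)) ->
  continuous (fun z : R * R => Rpower (snd z) c * phi (fst z + be * ln (snd z))) z.
Proof.
  destruct z as [x y]; simpl. intros hy hphi.
  apply (continuous_mult (K := R_AbsRing) (fun z : R * R => Rpower (snd z) c) (fun z : R * R => phi (fst z + be * ln (snd z)))).
  - apply (continuous_comp (fun z : R * R => snd z) (fun y => Rpower y c)). apply continuous_snd.
    apply cont_rpow_pt; auto.
  - apply (continuous_comp (fun z : R * R => fst z + be * ln (snd z)) phi).
    + apply (continuous_plus (fun z : R * R => fst z) (fun z : R * R => be * ln (snd z))).
      apply continuous_fst.
      apply (continuous_scal_r be (fun z : R * R => ln (snd z))).
      apply (continuous_comp (fun z : R * R => snd z) ln). apply continuous_snd. apply cont_ln_pt; auto.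
    + auto.
Qed.

Theorem proposition7p1 (p beta : R) (hp : 0 < p < 1 / 2) (hbeta : beta < 0) :
  exists r0 : R, 0 < r0 /\
  exists u : R * R -> R,
    convex_on2 (Sigma beta r0) u /\
    smooth_on2 (Sigma beta r0) u /\
    (* continuous up to the boundary curve *)
    (forall z, varsigma beta r0 z ->
       filterlim u
         (within (fun w => Sigma beta r0 w \/ varsigma beta r0 w) (locally z))
         (locally (u z))) /\
    (forall z, Sigma beta r0 z -> 0 < u z) /\
    (forall z, Sigma beta r0 z -> hess_det u z = Rpower (u z) p) /\
    (forall z, varsigma beta r0 z -> u z = 0).
Proof.
  set (a := 2 / (2 - p)).
  assert (ha1 : 1 < a). { unfold a. apply Rmult_lt_reg_r with (2 - p). lra. field_simplify; lra. }
  assert (hA : 0 < a * (a - 1)) by nra.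
  assert (hap : a * p = 2 * a - 2) by (unfold a; field; lra).
  destruct (ode_solution a (a * (a - 1)) (- beta) p hA ltac:(lra) ltac:(lra)) as [P [g [P1 [PD [g0 [gp gd]]]]]].
  assert (CP : Cinf P) by (apply (smooth_P a (a * (a - 1)) (- beta) p); auto; lra).
  assert (Cg : Cinf g) by (apply (smooth_g P g); auto).
  exists 1. split. lra.
  exists (fun z => Rpower (snd z) a * g (fst z + beta * ln (snd z))).
  assert (vs : forall z, varsigma beta 1 z -> 0 < snd z /\ fst z + beta * ln (snd z) = 0).
  { intros z [hy h]. split; auto. unfold Rpower in h. rewrite <- exp_plus in h.
    apply exp_inv. rewrite exp_0. auto. }
  split; [|split; [|split; [|split; [|split]]]].
  -
    intros [a1 a2] [b1 b2] Hseg t ht. simpl in *.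
    assert (Hin : forall s, 0 <= s <= 1 -> 0 < Xs a2 b2 s /\ 0 < Xs a1 b1 s + beta * ln (Xs a2 b2 s)).
    { intros s hs. apply (sigma_t beta _ (Hseg s hs)). }
    set (Y := Xs a2 b2). set (T := fun t => Xs a1 b1 t + beta * ln (Xs a2 b2 t)).
    set (dX := a1 - b1). set (dY := a2 - b2).
    set (Phi0 := fun s => (a * a * (P s * P s) + Rpower s p) / (P s * (a * (a - 1) * s + - beta * P s))).
    set (G1 := fun t => P (g t)). set (G2 := fun t => Phi0 (g t) * P (g t)).
    set (psi1 := fun t => Rpower (Y t) (a - 1) * (a * dY * g (T t) + G1 (T t) * (dX * Y t + beta * dY))).
    set (w := fun t => dX + beta * (dY / Y t)). set (e := fun t => dY / Y t).
    set (psi2 := fun t => Rpower (Y t) (a - 1 - 1) * (Y t * Y t) *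
      (G2 (T t) * (w t * w t) + 2 * a * e t * w t * G1 (T t) + (a * (a - 1) * g (T t) - beta * G1 (T t)) * (e t * e t))).
    assert (C := convex_1d (fun s => Rpower (Y s) a * g (T s)) psi1 psi2).
    assert (SD := fun s hs => seg_derivs a beta p P g a1 a2 b1 b2 s hA hbeta P1 PD gp gd (proj1 (Hin s hs)) (proj2 (Hin s hs))).
    specialize (C (fun s hs => proj1 (SD s hs)) (fun s hs => proj1 (proj2 (SD s hs))) (fun s hs => proj2 (proj2 (SD s hs))) t ht).
    unfold Y, T, Xs in C. replace (1 * a1 + (1 - 1) * b1) with a1 in C by ring.
    replace (1 * a2 + (1 - 1) * b2) with a2 in C by ring.
    replace (0 * a1 + (1 - 0) * b1) with b1 in C by ring.
    replace (0 * a2 + (1 - 0) * b2) with b2 in C by ring. exact C.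
  - intros k. apply Ck2_class. auto.
  - intros z hz. apply (filterlim_filter_le_1 (F := locally z)). apply filter_le_within.
    destruct (vs z hz). apply cont_class'; auto.
    apply (ex_derive_continuous (V:=R_NormedModule)). eexists; apply gd.
  - intros z hz. destruct (sigma_t beta z hz). apply Rmult_lt_0_compat. unfold Rpower; apply exp_pos. apply gp; auto.
  - intros z hz. apply (hess_formula a beta p P g); auto.
  - intros z hz. destruct (vs z hz) as [_ h]. rewrite h, g0. ring.
Qed.
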